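(* Let $X=\{1,\dots,n\}$, $Y$ finite, $Q$ a symmetric irreducible stochastic matrix on $Y$ (notation in context). Let $0\le h\le n$ and let $\underline b$ be a type with $b_0+\cdots+b_m=h$. Then the subspaces $P_{h,\underline b,k}$ of $L(\Theta_h)$, for the integers $k$ with $\ell(\underline b)\le k\le\min\{h,\frac{n+\ell(\underline b)}{2}\}$, are mutually orthogonal with respect to the inner product $\langle F,G\rangle=\sum_{\theta\in\Theta_h}F(\theta)\overline{G(\theta)}$.
   Context: $Q$ acts on $L(Y)$ by $(Qf)(y)=\sum_{y'}q(y,y')f(y')$, with distinct eigenvalues $\lambda_0=1,\dots,\lambda_m$ and eigenspaces $W_0$ (constants), $W_1,\dots,W_m$. For $0\le k\le n$, $\Theta_k$ is the set of functions $\theta$ with $\mathrm{dom}(\theta)$ a $k$-subset of $X$ and values in $Y$ ($\Theta_0$ = empty function); $\varphi\subseteq\theta$ means $\mathrm{dom}\varphi\subseteq\mathrm{dom}\theta$ and $\theta|_{\mathrm{dom}\varphi}=\varphi$. For $1\le k\le n$: $(D_kF)(\varphi)=\sum_{\theta\in\Theta_k:\theta\supseteq\varphi}F(\theta)$ and $(D_k^*F)(\theta)=\sum_{\varphi\in\Theta_{k-1}:\varphi\subseteq\theta}F(\varphi)$; $D_0:=0$. Types $\underline c=(c_0,\dots,c_m)$, $|\underline c|=\sum c_i$, $\ell(\underline c)=c_1+\cdots+c_m$, $\underline c'=(c_0-1,c_1,\dots,c_m)$. A fundamental function of type $\underline c$ on $A$, $|A|=|\underline c|$, is $F=\bigotimes_{j\in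 A}F^j$ ($F(\theta)=\prod_{j\in A}F^j(\theta(j))$ on $Y^A$, $0$ elsewhere) with each $F^j$ in some $W_{i_j}$ and exactly $c_i$ indices with $i_j=i$; $P_{k,\underline c,A}$ is their span, $P_{k,\underline c}=\bigoplus_{|A|=k}P_{k,\underline c,A}$ ($\{0\}$ if an entry is negative). $D_{k,\underline c}=D_k|_{P_{k,\underline c}}$, $D^*_{k,\underline c}=D^*_k|_{P_{k-1,\underline c'}}$. For $|\underline c|=k$: $P_{k,\underline c,k}=\ker D_{k,\underline c}$; for $k<h\le n$, $|\underline c|=h$, $\ell(\underline c)\le k$: $P_{h,\underline c,k}=D^*_{h,\underline c}(P_{h-1,\underline c',k})$. *)

(* Defs.v *)
From mathcomp Require Import all_boot all_order all_algebra.
Set Implicit Arguments. Unset Strict Implicit. Unset Printing Implicit Defensive.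
Import Order.TTheory GRing.Theory Num.Theory.
Local Open Scope ring_scope.

Section Defs.
Variables (C : numClosedFieldType) (Y : finType) (n : nat).

(* Partial functions X -> Y with X = 'I_n; dom = where defined. *)
Definition Theta := {ffun 'I_n -> option Y}.
Definition dom (t : Theta) : {set 'I_n} := [set j | t j != None].
Definition subf (phi theta : Theta) : bool :=
  [forall j, (phi j != None) ==> (theta j == phi j)].

Definition qaction (q : Y -> Y -> C) (f : Y -> C) : Y -> C :=
  fun y => \sum_(y' : Y) q y y' * f y'.

Fixpoint qpow (q : Y -> Y -> C) (k : nat) : Y -> Y -> C :=
  match k with
  | 0 => fun y y' => (y == y')%:R
  | k'.+1 => fun y y' => \sum_(z : Y) qpow q k' y z * q z y'
  end.

Definition sym_irr_stochastic (q : Y -> Y -> C) : Prop :=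
  [/\ (forall y y', 0 <= q y y'),
      (forall y, \sum_(y' : Y) q y y' = 1),
      (forall y y', q y y' = q y' y) &
      (forall y y', exists k, 0 < qpow q k y y')].

Definition W (q : Y -> Y -> C) (mu : C) (f : Y -> C) : Prop :=
  forall y, qaction q f y = mu * f y.

Definition eigen_enum (m : nat) (q : Y -> Y -> C) (lam : 'I_m.+1 -> C) : Prop :=
  [/\ lam ord0 = 1, injective lam,
      (forall i, exists f : Y -> C, (exists y, f y != 0) /\ W q (lam i) f) &
      (forall (mu : C) (f : Y -> C), (exists y, f y != 0) -> W q mu f ->
          exists i, mu = lam i)].

Section Spaces.
Variables (m : nat) (q : Y -> Y -> C) (lam : 'I_m.+1 -> C).

(* fundamental function of type c on A (types are int-valued so that
   a type with a negative entry has no fundamental functions, giving {0}) *)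
Definition fundamental (c : 'I_m.+1 -> int) (A : {set 'I_n}) (F : Theta -> C)
  : Prop :=
  exists (idx : 'I_n -> 'I_m.+1) (Fj : 'I_n -> Y -> C),
    [/\ (forall i, (#|[set j in A | idx j == i]|)%:Z = c i),
        (forall j, j \in A -> W q (lam (idx j)) (Fj j)) &
        (forall t, F t = if dom t == A then
                          \prod_(j in A) match t j with
                                         | Some y => Fj j y
                                         | None => 0
                                         end
                        else 0)].

Definition span (S : (Theta -> C) -> Prop) (F : Theta -> C) : Prop :=
  exists (N : nat) (a : 'I_N -> C) (g : 'I_N -> Theta -> C),
    (forall i, S (g i)) /\ (forall t, F t = \sum_(i < N) a i * g i t).

Definition PkcA (c : 'I_m.+1 -> int) (A : {set 'I_n}) := span (fundamental c A).
Definition Pkc (k : nat) (c : 'I_m.+1 -> int) : (Theta -> C) -> Prop :=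
  span (fun F => exists A : {set 'I_n}, #|A| = k /\ fundamental c A F).

Definition Dop (k : nat) (F : Theta -> C) : Theta -> C :=
  fun phi => if k is k'.+1 then
     (if #|dom phi| == k' then
        \sum_(t : Theta | (#|dom t| == k) && subf phi t) F t else 0)
     else 0.

Definition Dstar (k : nat) (F : Theta -> C) : Theta -> C :=
  fun theta => if #|dom theta| == k then
     \sum_(phi : Theta | (#|dom phi| == k.-1) && subf phi theta) F phi else 0.

Definition cprime (c : 'I_m.+1 -> int) : 'I_m.+1 -> int :=
  fun i => if i == ord0 then c i - 1 else c i.

(* P_{k+d, c, k}, by recursion on d = h - k *)
Fixpoint Phck (d k : nat) (c : 'I_m.+1 -> int) : (Theta -> C) -> Prop :=
  match d with
  | 0 => fun F => Pkc k c F /\ (forall t, Dop k F t = 0)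
  | d'.+1 => fun G => exists F, Phck d' k (cprime c) F /\
                                (forall t, G t = Dstar (k + d'.+1) F t)
  end.

Definition Phk (h : nat) (c : 'I_m.+1 -> int) (k : nat) := Phck (h - k) k c.

End Spaces.

Definition ip (h : nat) (F G : Theta -> C) : C :=
  \sum_(t : Theta | #|dom t| == h) F t * Num.conj (G t).

Definition ell (m : nat) (c : 'I_m.+1 -> nat) : nat :=
  (\sum_(i < m.+1 | i != ord0) c i)%N.

End Defs.

(* Main.v *)
Require Import Defs.
From mathcomp Require Import all_boot all_order all_algebra.
From mathcomp Require Import ring zify.
Import Order.TTheory GRing.Theory Num.Theory.
Local Open Scope ring_scope.
Set Implicit Arguments. Unset Strict Implicit. Unset Printing Implicit Defensive.

Section Comb.
Variables (C : numClosedFieldType) (Y : finType) (n : nat).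
Local Notation Th := (Theta Y n).

Definition upd (t : Th) (x : 'I_n) (v : option Y) : Th :=
  [ffun j => if j == x then v else t j].

Lemma in_dom (t : Th) x : (x \in dom t) = (t x != None).
Proof. by rewrite inE. Qed.

Lemma dom_upd_some (t : Th) x y : dom (upd t x (Some y)) = x |: dom t.
Proof.
apply/setP=> j; rewrite !inE ffunE; case: (j == x) => //.
Qed.

Lemma dom_upd_none (t : Th) x : dom (upd t x None) = dom t :\ x.
Proof.
apply/setP=> j; rewrite !inE ffunE; case: (j == x) => //.
Qed.

Lemma subf_dom (p t : Th) : subf p t -> dom p \subset dom t.
Proof.
move=> /forallP H; apply/subsetP=> j; rewrite !inE => Hj.
by have := H j; rewrite Hj /= => /eqP ->.
Qed.

Lemma subfP (p t : Th) j : subf p t -> p j != None -> t j = p j.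
Proof. by move=> /forallP /(_ j) H Hj; move: H; rewrite Hj => /eqP. Qed.

Lemma two_extra (D E : {set 'I_n}) a b : D \subset E -> a \in E -> b \in E ->
  a \notin D -> b \notin D -> a != b -> (#|D|.+2 <= #|E|)%N.
Proof.
move=> sDE aE bE aD bD ab.
have S : a |: (b |: D) \subset E.
  by rewrite !subUset !sub1set aE bE sDE.
have := subset_leq_card S.
by rewrite !cardsU1 !inE (negbTE ab) (negbTE aD) (negbTE bD).
Qed.

Lemma one_extra (D E : {set 'I_n}) : (#|D| < #|E|)%N ->
  exists a, a \in E /\ a \notin D.
Proof.
move=> lt; case: (boolP (E \subset D)) => [sED|].
  by have := subset_leq_card sED; rewrite leqNgt lt.
by case/subsetPn => a aE aD; exists a.
Qed.

Definition h1 (phi : Th) (t : Th) : option ('I_n * Y) :=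
  if [pick x | (t x != None) && (phi x == None)] is Some x then
    (if t x is Some y then Some (x, y) else None) else None.

Lemma R1 (phi : Th) (j : nat) (G : Th -> C) : #|dom phi| = j ->
  \sum_(t | (#|dom t| == j.+1) && subf phi t) G t =
  \sum_(x | x \notin dom phi) \sum_(y : Y) G (upd phi x (Some y)).
Proof.
move=> dj.
rewrite (reindex_omap (fun p : 'I_n * Y => upd phi p.1 (Some p.2)) (h1 phi)).
  rewrite pair_big_dep; apply: eq_bigl => -[x y] /=.
  rewrite dom_upd_some.
  case xD: (x \in dom phi) => /=.
    by rewrite cardsU1 xD /= dj add0n eqn_leq ltnn /= andbF.
  rewrite cardsU1 xD dj eqxx /=.
  have -> : subf phi (upd phi x (Some y)).
    apply/forallP=> i; apply/implyP=> Hi; rewrite ffunE.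
    case: (i =P x) => // ix; move: xD; rewrite in_dom -ix (negbTE Hi) //.
  rewrite /h1; case: pickP => [z|].
    rewrite !ffunE; case: (z =P x) => [->|zx]; first by rewrite !eqxx.
    by case/andP => /negP.
  by move=> /(_ x); rewrite !ffunE eqxx /=; move: xD; rewrite in_dom => /negbFE ->.
move=> t /andP[/eqP ct st].
have sdt := subf_dom st.
have [x [xt xD]] : exists x, x \in dom t /\ x \notin dom phi.
  by apply: one_extra; rewrite ct dj.
rewrite /h1; case: pickP => [z /andP[zt zD]|]; last first.
  by move=> /(_ x); rewrite -!in_dom xt /=; move: xD; rewrite in_dom negbK => ->.
move: zt; rewrite -in_dom => zt; move: zD => /eqP zD.
case tz: (t z) => [y|]; last by move: zt; rewrite in_dom tz.
congr Some; apply/ffunP=> i; rewrite ffunE /=.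
case: (i =P z) => [->|iz]; first by rewrite tz.
case pi: (phi i) => [w|].
  by rewrite (subfP st) ?pi.
case ti: (t i) => [w|] //.
have := @two_extra (dom phi) (dom t) i z sdt; rewrite !in_dom ti.
rewrite tz pi zD /= => /(_ isT isT isT isT).
have iz' : i != z by apply/eqP.
by rewrite ct dj ltnn => /(_ iz').
Qed.

Definition h2 (t : Th) (p : Th) : option 'I_n :=
  [pick x | (t x != None) && (p x == None)].

Lemma R2 (t : Th) (j : nat) (G : Th -> C) : #|dom t| = j.+1 ->
  \sum_(p | (#|dom p| == j) && subf p t) G p =
  \sum_(z in dom t) G (upd t z None).
Proof.
move=> dj.
rewrite (reindex_omap (fun z => upd t z None) (h2 t)).
  apply: eq_bigl => z /=; rewrite dom_upd_none.
  case zD: (z \in dom t) => /=; last first.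
    by move: dj; rewrite (cardsD1 z) zD add0n => ->; rewrite eqn_leq ltnn.
  rewrite (cardsD1 z) zD in dj.
  move: dj; rewrite add1n => [[->]]; rewrite eqxx /=.
  have -> : subf (upd t z None) t.
    apply/forallP=> i; rewrite !ffunE; case: (i =P z) => _ //=; by rewrite eqxx implybT.
  rewrite /h2; case: pickP => [w|].
    rewrite !ffunE; case: (w =P z) => [->|wz]; first by rewrite !eqxx.
    by case/andP => /negP.
  by move=> /(_ z); rewrite !ffunE eqxx /=; rewrite in_dom in zD; rewrite zD.
move=> p /andP[/eqP cp sp].
have sdt := subf_dom sp.
have [x [xt xD]] : exists x, x \in dom t /\ x \notin dom p.
  by apply: one_extra; rewrite cp dj.
rewrite /h2; case: pickP => [z /andP[zt /eqP zD]|]; last first.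
  by move=> /(_ x); rewrite -!in_dom xt /=; move: xD; rewrite in_dom negbK => ->.
move: zt; rewrite -in_dom => zt.
congr Some; apply/ffunP=> i; rewrite ffunE /=.
case: (i =P z) => [->|iz]; first by rewrite zD.
case pi: (p i) => [w|].
  by rewrite (subfP sp) ?pi.
case ti: (t i) => [w|] //.
have := @two_extra (dom p) (dom t) i z sdt; rewrite !in_dom ti.
rewrite pi zD /= -in_dom zt => /(_ isT isT isT isT).
have iz' : i != z by apply/eqP.
by rewrite cp dj ltnn => /(_ iz').
Qed.


Lemma upd_upd_same (t : Th) x v w : upd (upd t x v) x w = upd t x w.
Proof. by apply/ffunP=> i; rewrite !ffunE; case: (i == x). Qed.

Lemma upd_id (t : Th) x : t x = None -> upd t x None = t.
Proof. by move=> tx; apply/ffunP=> i; rewrite !ffunE; case: (i =P x) => // ->. Qed.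

Lemma upd_comm (t : Th) x z v w : x != z -> upd (upd t x v) z w = upd (upd t z w) x v.
Proof.
move=> xz; apply/ffunP=> i; rewrite !ffunE.
case: (i =P z) => [iz|iz]; case: (i =P x) => [ix|ix] //.
by move: xz; rewrite -iz -ix eqxx.
Qed.

Lemma DDstar_expand (F : Th -> C) (j : nat) (phi : Th) : #|dom phi| = j ->
  Dop j.+1 (Dstar j.+1 F) phi =
  (#|~: dom phi| * #|Y|)%:R * F phi +
  \sum_(x in ~: dom phi) \sum_(y : Y) \sum_(z in dom phi)
      F (upd (upd phi x (Some y)) z None).
Proof.
move=> dj; rewrite /Dop dj eqxx (R1 _ dj).
rewrite (eq_bigl (fun x => x \in ~: dom phi)); last by move=> x /=; rewrite !inE.
rewrite natrM -[_ * _ * _]mulrA mulr_natl -sumr_const -big_split /=.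
apply: eq_bigr => x; rewrite inE => xD.
rewrite mulr_natl -sumr_const -big_split /=; apply: eq_bigr => y _.
rewrite /Dstar dom_upd_some cardsU1 xD dj eqxx /=.
rewrite (R2 _ (_ : #|dom (upd phi x (Some y))| = j.+1)); last first.
  by rewrite dom_upd_some cardsU1 xD dj.
rewrite dom_upd_some big_setU1 //= upd_upd_same upd_id //.
by move: xD; rewrite in_dom negbK => /eqP.
Qed.

Lemma DstarD_expand (F : Th -> C) (j : nat) (phi : Th) : #|dom phi| = j ->
  Dstar j (Dop j F) phi =
  \sum_(z in dom phi) \sum_(y : Y) F (upd phi z (Some y)) +
  \sum_(z in dom phi) \sum_(x in ~: dom phi) \sum_(y : Y)
      F (upd (upd phi x (Some y)) z None).
Proof.
case: j => [|j] dj.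
  rewrite (cards0_eq dj) !big_set0 addr0 /Dstar /Dop.
  by case: ifP => // _; rewrite big1.
rewrite /Dstar dj eqxx /= (R2 _ dj) -big_split /=.
apply: eq_bigr => z zD.
rewrite /Dop dom_upd_none.
have cz : #|dom phi :\ z| = j by move: dj; rewrite (cardsD1 z) zD add1n => [[]].
rewrite cz eqxx (R1 _ (_ : #|dom (upd phi z None)| = j)); last by rewrite dom_upd_none.
rewrite dom_upd_none (bigD1 z) /=; last by rewrite !inE eqxx.
congr (_ + _).
  by apply: eq_bigr => y _; rewrite upd_upd_same.
rewrite (eq_bigl (fun x => x \in ~: dom phi)); last first.
  move=> x; rewrite !inE; case: (x =P z) => [->|] /=.
    by rewrite in_dom in zD; rewrite zD.
  by move=> _; rewrite andbT.
apply: eq_bigr => x; rewrite inE => xD; apply: eq_bigr => y _.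
by rewrite upd_comm //; apply/eqP=> zx; move: xD; rewrite -zx zD.
Qed.

Lemma comm_identity (F : Th -> C) (j : nat) (phi : Th) : #|dom phi| = j ->
  Dop j.+1 (Dstar j.+1 F) phi =
  Dstar j (Dop j F) phi + (#|~: dom phi| * #|Y|)%:R * F phi -
  \sum_(z in dom phi) \sum_(y : Y) F (upd phi z (Some y)).
Proof.
move=> dj; rewrite (DDstar_expand F dj) (DstarD_expand F dj).
have -> : \sum_(x in ~: dom phi) \sum_(y : Y) \sum_(z in dom phi)
      F (upd (upd phi x (Some y)) z None) =
  \sum_(z in dom phi) \sum_(x in ~: dom phi) \sum_(y : Y)
      F (upd (upd phi x (Some y)) z None).
  rewrite [RHS]exchange_big /=; apply: eq_bigr => x _; exact: exchange_big.
set a := (_%:R * F phi); set b := \sum_(z in dom phi) \sum_y F (upd phi z _).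
set c := \sum_(z in dom phi) \sum_(x in _) _.
by rewrite addrAC [b + c - b]addrAC subrr add0r addrC.
Qed.

End Comb.

Section Span.
Variables (C : numClosedFieldType) (Y : finType) (n : nat).
Local Notation Th := (Theta Y n).

Lemma span0 (S : (Th -> C) -> Prop) : Defs.span S (fun _ => 0).
Proof. by exists 0%N, (fun _ => 0), (fun _ _ => 0); split => [[]|t]; rewrite ?big_ord0. Qed.

Lemma span1 (S : (Th -> C) -> Prop) f : S f -> Defs.span S f.
Proof.
move=> Sf; exists 1%N, (fun _ => 1), (fun _ => f); split=> // t.
by rewrite big_ord1 mul1r.
Qed.

Lemma span_add (S : (Th -> C) -> Prop) f g : Defs.span S f -> Defs.span S g ->
  Defs.span S (fun t => f t + g t).
Proof.
move=> [N1 [a1 [g1 [S1 E1]]]] [N2 [a2 [g2 [S2 E2]]]].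
exists (N1 + N2)%N, (fun k => match split k with inl i => a1 i | inr i => a2 i end),
  (fun k => match split k with inl i => g1 i | inr i => g2 i end); split.
  by move=> k; case: (split k).
move=> t; rewrite big_split_ord E1 E2; congr (_ + _); apply: eq_bigr => i _.
  by rewrite (unsplitK (inl i)).
by rewrite (unsplitK (inr i)).
Qed.

Lemma span_scale (S : (Th -> C) -> Prop) f (c : C) : Defs.span S f ->
  Defs.span S (fun t => c * f t).
Proof.
move=> [N [a [g [Sg E]]]]; exists N, (fun i => c * a i), g; split=> // t.
by rewrite E mulr_sumr; apply: eq_bigr => i _; rewrite mulrA.
Qed.

Lemma span_ext (S : (Th -> C) -> Prop) f g : Defs.span S f -> (forall t, g t = f t) ->
  Defs.span S g.
Proof.
move=> [N [a [h [Sh E]]]] fg; exists N, a, h; split=> // t; by rewrite fg E.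
Qed.

Lemma span_sum (S : (Th -> C) -> Prop) (I : finType) (P : pred I) (f : I -> Th -> C) :
  (forall i, P i -> Defs.span S (f i)) -> Defs.span S (fun t => \sum_(i | P i) f i t).
Proof.
move=> Hf; rewrite /index_enum; elim: (Finite.enum I) => [|i s IH].
  by apply: (span_ext (span0 S)) => t; rewrite big_nil.
apply: (@span_ext _ (fun t => (if P i then f i t else 0) + \sum_(j <- s | P j) f j t)).
  apply: span_add => //; case Pi: (P i); first exact: Hf.
  exact: span0.
by move=> t; rewrite big_cons; case: (P i); rewrite ?add0r.
Qed.

Lemma span_span (S : (Th -> C) -> Prop) f : Defs.span (Defs.span S) f -> Defs.span S f.
Proof.
move=> [N [a [g [Sg E]]]].
apply: (span_ext (f := fun t => \sum_(i < N | true) a i * g i t)); last by move=> t; rewrite E.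
apply: span_sum => i _; exact: span_scale.
Qed.

End Span.

Section Eig.
Variables (C : numClosedFieldType) (Y : finType) (q : Y -> Y -> C).
Hypothesis hq : sym_irr_stochastic q.

Lemma colsum y : \sum_(y' : Y) q y' y = 1.
Proof.
case: hq => _ q1 qs _; rewrite -(q1 y); apply: eq_bigr => y' _; exact: qs.
Qed.

Lemma W_sum mu f : W q mu f -> mu != 1 -> \sum_y f y = 0.
Proof.
move=> Wf mu1.
have E : \sum_y qaction q f y = \sum_y f y.
  rewrite /qaction exchange_big /=; apply: eq_bigr => y' _.
  by rewrite -mulr_suml colsum mul1r.
have E2 : \sum_y qaction q f y = mu * \sum_y f y.
  by rewrite mulr_sumr; apply: eq_bigr => y _; rewrite Wf.
move: E; rewrite E2 => /eqP; rewrite -subr_eq0 -{2}[\sum_y f y]mul1r -mulrBl.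
by rewrite mulf_eq0 subr_eq0 (negbTE mu1) /= => /eqP.
Qed.

Lemma qpow_ge0 k y y' : 0 <= qpow q k y y'.
Proof.
case: hq => q0 _ _ _.
elim: k y y' => [|k IH] y y' /=; first exact: ler0n.
by apply: sumr_ge0 => z _; apply: mulr_ge0.
Qed.

Lemma W1_edge f : W q 1 f -> forall y y', 0 < q y y' -> f y = f y'.
Proof.
case: hq => q0 q1 qs _ Wf.
have S1 : \sum_y \sum_y' q y y' * ((f y - f y') * Num.conj (f y)) = 0.
  apply: big1 => y _.
  rewrite (eq_bigr (fun y' => (q y y' * (f y - f y')) * Num.conj (f y))); last first.
    by move=> y' _; rewrite mulrA.
  rewrite -mulr_suml (eq_bigr (fun y' => q y y' * f y - q y y' * f y')); last first.
    by move=> y' _; rewrite mulrBr.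
  rewrite sumrB -mulr_suml q1 mul1r.
  have := Wf y; rewrite /qaction mul1r => ->.
  by rewrite subrr mul0r.
have S2 : \sum_y \sum_y' q y y' * ((f y - f y') * Num.conj (f y')) = 0.
  rewrite exchange_big /=.
  rewrite (eq_bigr (fun a => - \sum_b q a b * ((f a - f b) * Num.conj (f a)))).
    by rewrite sumrN S1 oppr0.
  move=> a _; rewrite -sumrN; apply: eq_bigr => b _.
  by rewrite qs -mulrN -mulNr opprB.
have S3 : \sum_y \sum_y' q y y' * ((f y - f y') * Num.conj (f y - f y')) = 0.
  transitivity (\sum_y \sum_y' q y y' * ((f y - f y') * Num.conj (f y)) -
    \sum_y \sum_y' q y y' * ((f y - f y') * Num.conj (f y'))); last by rewrite S1 S2 subrr.
  rewrite -sumrB; apply: eq_bigr => y _.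
  rewrite -sumrB; apply: eq_bigr => y' _.
  by rewrite rmorphB -mulrBr -mulrBr.
move=> y y' lt.
have := S3; move/eqP; rewrite psumr_eq0; last first.
  by move=> a _; apply: sumr_ge0 => b _; apply: mulr_ge0 => //; apply: mul_conjC_ge0.
move=> /allP /(_ y (mem_index_enum _)) /=.
rewrite psumr_eq0; last by move=> b _; apply: mulr_ge0 => //; apply: mul_conjC_ge0.
move=> /allP /(_ y' (mem_index_enum _)) /=.
rewrite mulf_eq0 mul_conjC_eq0 subr_eq0 => /orP[|/eqP //].
by move: lt; rewrite lt0r => /andP[/negbTE ->].
Qed.

Lemma W1_const f : W q 1 f -> forall y y', f y = f y'.
Proof.
move=> Wf y y'; case: hq => q0 _ _ qi.
have [k Hk] := qi y y'.
elim: k y' Hk => [|k IH] y' /=.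
  by case: (y =P y') => [-> //|_]; rewrite /= ltxx.
move=> H.
case: (boolP [exists z, qpow q k y z * q z y' != 0]) => [/existsP[z Hz]|].
  move: Hz; rewrite mulf_eq0 negb_or => /andP[H1 H2].
  rewrite (IH z); last by rewrite lt0r H1 qpow_ge0.
  by apply: (W1_edge Wf); rewrite lt0r H2 q0.
move=> /existsPn Hn; move: H; rewrite big1 ?ltxx // => z _.
by apply/eqP; move: (Hn z); rewrite negbK.
Qed.

End Eig.

Section Fund.
Variables (C : numClosedFieldType) (Y : finType) (n m : nat).
Variables (q : Y -> Y -> C) (lam : 'I_m.+1 -> C).
Hypothesis hq : sym_irr_stochastic q.
Hypothesis hlam : eigen_enum q lam.
Local Notation Th := (Theta Y n).

Lemma setU1_in (D : {set 'I_n}) z : z \in D -> z |: D = D.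
Proof. by move=> zD; apply/setP=> w; rewrite !inE; case: (w =P z) => // ->. Qed.

Lemma fund_T c A (F : Th -> C) : fundamental q lam c A F -> forall phi : Th,
  \sum_(z in dom phi) \sum_(y : Y) F (upd phi z (Some y)) =
  (#|Y|%:R * (c ord0)%:~R) * F phi.
Proof.
move=> [idx [Fj [cnt Weig Fdef]]] phi.
case: (boolP (dom phi == A)) => [/eqP dA|ndA]; last first.
  rewrite Fdef (negbTE ndA) mulr0; apply: big1 => z zD; apply: big1 => y _.
  by rewrite Fdef dom_upd_some setU1_in // (negbTE ndA).
pose M a := match phi a with Some y => Fj a y | None => 0 end.
have FM : F phi = \prod_(a in A) M a by rewrite Fdef dA eqxx.
case: hlam => l0 linj _ _.
have step : forall z, z \in A -> \sum_(y : Y) F (upd phi z (Some y)) =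
    if idx z == ord0 then #|Y|%:R * F phi else 0.
  move=> z zA.
  have E : forall y, F (upd phi z (Some y)) = Fj z y * \prod_(a in A | a != z) M a.
    move=> y; rewrite Fdef dom_upd_some setU1_in ?dA // eqxx (bigD1 z) //= ffunE eqxx.
    congr (_ * _); apply: eq_bigr => a /andP[_ az]; by rewrite ffunE (negbTE az).
  rewrite (eq_bigr _ (fun y _ => E y)) -mulr_suml.
  case: (idx z =P ord0) => [i0|i0].
    have W1 : W q 1 (Fj z) by rewrite -l0 -i0; apply: Weig.
    have zD : z \in dom phi by rewrite dA.
    move: zD; rewrite in_dom; case pz: (phi z) => [w|] // _.
    rewrite (eq_bigr (fun _ => Fj z w)); last by move=> y _; apply: (W1_const hq W1).
    rewrite sumr_const FM [X in _ = _ * X](bigD1 z) //= /M pz.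
    by rewrite mulrA mulr_natl.
  have mu1 : lam (idx z) != 1.
    by rewrite -l0; apply/eqP => /linj.
  by rewrite (W_sum hq (Weig z zA) mu1) mul0r.
rewrite dA (eq_bigr _ step) -big_mkcondr /=.
rewrite (eq_bigl (fun z => z \in [set z in A | idx z == ord0])); last first.
  by move=> z /=; rewrite !inE.
rewrite sumr_const -cnt -mulr_natl.
change (((#|[set j in A | idx j == ord0]|)%:Z)%:~R : C) with
  ((#|[set j in A | idx j == ord0]|)%:R : C).
by rewrite -mulr_natr; ring.
Qed.


Lemma T_span j c (X : Th -> C) : Pkc q lam j c X -> forall phi : Th,
  \sum_(z in dom phi) \sum_(y : Y) X (upd phi z (Some y)) =
  (#|Y|%:R * (c ord0)%:~R) * X phi.
Proof.
move=> [N [a [g [Sg E]]]] phi.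
transitivity (\sum_(i < N) a i * \sum_(z in dom phi) \sum_(y : Y) g i (upd phi z (Some y))).
  rewrite (eq_bigr (fun z => \sum_(i < N) \sum_(y : Y) a i * g i (upd phi z (Some y)))).
    rewrite exchange_big /=; apply: eq_bigr => i _; rewrite mulr_sumr.
    by apply: eq_bigr => z _; rewrite mulr_sumr.
  by move=> z _; rewrite exchange_big /=; apply: eq_bigr => y _; rewrite E.
rewrite E mulr_sumr; apply: eq_bigr => i _.
have [A [_ fA]] := Sg i.
by rewrite (fund_T fA) mulrCA.
Qed.

Lemma KL j c (X : Th -> C) (phi : Th) : Pkc q lam j c X -> #|dom phi| = j ->
  Dop j.+1 (Dstar j.+1 X) phi = Dstar j (Dop j X) phi +
  (((n - j) * #|Y|)%:R - #|Y|%:R * (c ord0)%:~R) * X phi.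
Proof.
move=> PX dj; rewrite (comm_identity X dj) (T_span PX).
have -> : #|~: dom phi| = (n - j)%N.
  have H := cardsC (dom phi); rewrite dj in H.
  by rewrite -[in RHS](card_ord n) -H addKn.
by rewrite mulrBl addrA.
Qed.

Definition cinc (c : 'I_m.+1 -> int) : 'I_m.+1 -> int :=
  fun i => if i == ord0 then c i + 1 else c i.

Lemma Dstar_sum k (X : Th -> C) N (a : 'I_N -> C) (g : 'I_N -> Th -> C) :
  (forall t, X t = \sum_(i < N) a i * g i t) ->
  forall t, Dstar k X t = \sum_(i < N) a i * Dstar k (g i) t.
Proof.
move=> E t; rewrite /Dstar; case: ifP => _; last by rewrite big1 // => i _; rewrite mulr0.
rewrite (eq_bigr _ (fun p _ => E p)) exchange_big /=; apply: eq_bigr => i _.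
by rewrite mulr_sumr.
Qed.

Lemma Dstar_fund j c (A : {set 'I_n}) (F : Th -> C) : #|A| = j -> fundamental q lam c A F ->
  Pkc q lam j.+1 (cinc c) (Dstar j.+1 F).
Proof.
move=> cA [idx [Fj [cnt Weig Fdef]]].
case: hlam => l0 _ _ _.
pose idx' x a := if a == x then ord0 else idx a.
pose Fj' x a := if a == x then (fun _ : Y => 1 : C) else Fj a.
pose G x (t : Th) := if dom t == x |: A then
   \prod_(a in x |: A) match t a with Some y => Fj' x a y | None => 0 end else 0.
pose P (t : Th) := \prod_(a in A) match t a with Some y => Fj a y | None => 0 end.
apply: (@span_ext _ _ _ _ (fun t => \sum_(x | x \notin A) G x t)).
  apply: span_sum => x xA; apply: span1; exists (x |: A); split.
    by rewrite cardsU1 xA cA.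
  exists (idx' x), (Fj' x); split => //.
  - move=> i.
    have -> : [set a in x |: A | idx' x a == i] =
        if i == ord0 then x |: [set a in A | idx a == i] else [set a in A | idx a == i].
      apply/setP=> a; rewrite /idx' !inE; case: (a =P x) => [->|ax] /=.
        rewrite eq_sym; case: (i =P ord0) => /= _; rewrite !inE ?eqxx //; by rewrite (negbTE xA).
      by case: (i =P ord0) => //= _; rewrite !inE; case: (a =P x).
    rewrite /cinc; case: (i =P ord0) => [->|_]; last by rewrite cnt.
    by rewrite cardsU1 inE (negbTE xA) /= PoszD cnt addrC.
  - move=> a; rewrite /idx' /Fj' !inE; case: (a =P x) => [_ _|ax /= aA]; last exact: Weig.
    have q1 : forall y, \sum_y' q y y' = 1 by case: hq.
    move=> y; rewrite /qaction l0 mul1r (eq_bigr (fun y0 => q y y0)) ?q1 // => y0 _; exact: mulr1.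
move=> t; rewrite /Dstar; case: ifP => ct; last first.
  apply/esym/big1 => x xA; rewrite /G; case: ifP => // /eqP dt.
  by move: ct; rewrite dt cardsU1 xA cA eqxx.
rewrite (R2 _ (_ : #|dom t| = j.+1)); last by apply/eqP.
transitivity (\sum_(z | (z \notin A) && (dom t == z |: A)) P t).
  rewrite (eq_bigr (fun z => if dom t :\ z == A then P t else 0)); last first.
    move=> z zt; rewrite Fdef dom_upd_none; case: ifP => // /eqP dA.
    rewrite /P; apply: eq_bigr => a aA; rewrite ffunE.
    by case: (a =P z) => // az; move: aA; rewrite -dA az !inE eqxx.
  have Ez : forall z, ((z \in dom t) && (dom t :\ z == A)) =
       ((z \notin A) && (dom t == z |: A)).
    move=> z; apply/andP/andP => [[zt /eqP dA]|[zA /eqP dz]].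
      split; first by rewrite -dA !inE eqxx.
      by rewrite -dA setD1K.
    by split; [rewrite dz !inE eqxx | rewrite dz setU1K].
  rewrite [LHS]big_mkcond [RHS]big_mkcond /=; apply: eq_bigr => z _.
  by rewrite -Ez; case: (z \in dom t); case: (_ == A).
rewrite [RHS](eq_bigr (fun x => if dom t == x |: A then P t else 0)); last first.
  move=> x xA; rewrite /G; case: ifP => // /eqP dx.
  rewrite big_setU1 //= {1}/Fj' eqxx.
  have : x \in dom t by rewrite dx !inE eqxx.
  rewrite in_dom; case tx: (t x) => [w|] // _; rewrite mul1r /P.
  apply: eq_bigr => a aA; rewrite /Fj'; case: (a =P x) => // ax.
  by move: xA; rewrite -ax aA.
rewrite [LHS]big_mkcond [RHS]big_mkcond /=; apply: eq_bigr => z _.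
by case: (z \in A); case: (_ == _).
Qed.

Lemma Dstar_P j c (X : Th -> C) : Pkc q lam j c X -> Pkc q lam j.+1 (cinc c) (Dstar j.+1 X).
Proof.
move=> [N [a [g [Sg E]]]].
apply: (span_ext (f := fun t => \sum_(i < N | true) a i * Dstar j.+1 (g i) t)).
  apply: span_span; apply: span_sum => i _; apply: span_scale.
  apply: span1; have [A [cA fA]] := Sg i; exact: (Dstar_fund cA fA).
exact: Dstar_sum.
Qed.

End Fund.

Section Main.
Variables (C : numClosedFieldType) (Y : finType) (n m : nat).
Variables (q : Y -> Y -> C) (lam : 'I_m.+1 -> C).
Hypothesis hq : sym_irr_stochastic q.
Hypothesis hlam : eigen_enum q lam.
Local Notation Th := (Theta Y n).

Fixpoint DS (k r : nat) (X : Th -> C) : Th -> C :=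
  match r with 0 => X | r'.+1 => Dstar (k + r'.+1) (DS k r' X) end.

Lemma Dstar_ext k (F F' : Th -> C) : (forall t, #|dom t| = k.-1 -> F t = F' t) ->
  forall t, Dstar k F t = Dstar k F' t.
Proof.
move=> E t; rewrite /Dstar; case: ifP => // _.
by apply: eq_bigr => p /andP[/eqP cp _]; apply: E.
Qed.

Lemma Dop_ext k (F F' : Th -> C) : (forall t, #|dom t| = k -> F t = F' t) ->
  forall t, Dop k F t = Dop k F' t.
Proof.
move=> E t; rewrite /Dop; case: k E => // k E; case: ifP => // _.
by apply: eq_bigr => p /andP[/eqP cp _]; apply: E.
Qed.

Lemma Dstar_scale k (F : Th -> C) s t : Dstar k (fun u => s * F u) t = s * Dstar k F t.
Proof. by rewrite /Dstar; case: ifP => _; rewrite ?mulr0 // mulr_sumr. Qed.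

Lemma Dop_scale k (F : Th -> C) s t : Dop k (fun u => s * F u) t = s * Dop k F t.
Proof. by rewrite /Dop; case: k => [|k]; rewrite ?mulr0 //; case: ifP => _; rewrite ?mulr0 // mulr_sumr. Qed.

Lemma Dstar0 k t : Dstar k (fun _ : Th => 0 : C) t = 0.
Proof. by rewrite /Dstar; case: ifP => // _; rewrite big1. Qed.

Lemma Phck_unfold d k c (G : Th -> C) : Phck q lam d k c G ->
  exists c0 (G0 : Th -> C), [/\ Pkc q lam k c0 G0, (forall t, Dop k G0 t = 0) &
     forall t, G t = DS k d G0 t].
Proof.
elim: d c G => [|d IH] c G /=.
  by move=> [PG DG]; exists c, G.
move=> [F [PF EG]]; have [c0 [G0 [P0 D0 EF]]] := IH _ _ PF.
exists c0, G0; split=> // t; rewrite EG; apply: Dstar_ext => u _; exact: EF.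
Qed.

Lemma DS_P k c (F0 : Th -> C) : Pkc q lam k c F0 -> forall r, exists c',
  Pkc q lam (k + r) c' (DS k r F0).
Proof.
move=> P0; elim=> [|r [c' IH]]; first by exists c; rewrite addn0.
exists (cinc c'); rewrite addnS /=; rewrite addnS; exact: (Dstar_P hq hlam IH).
Qed.

Lemma L1 k c (F0 : Th -> C) : Pkc q lam k c F0 -> (forall t, Dop k F0 t = 0) ->
  forall r, exists s : C, forall phi : Th, #|dom phi| = (k + r)%N ->
  Dop (k + r).+1 (DS k r.+1 F0) phi = s * DS k r F0 phi.
Proof.
move=> P0 D0; elim=> [|r [s IH]].
  exists (((n - k) * #|Y|)%:R - #|Y|%:R * (c ord0)%:~R) => phi; rewrite addn0 => dp.
  have -> : DS k 1 F0 = Dstar k.+1 F0 by rewrite /= addn1.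
  rewrite (KL hq hlam P0 dp) (Dstar_ext (F' := fun _ => 0)) ?Dstar0 ?add0r //.
have [c' Pr] := DS_P P0 r.+1.
exists (s + (((n - (k + r.+1)) * #|Y|)%:R - #|Y|%:R * (c' ord0)%:~R)) => phi dp.
have -> : DS k r.+2 F0 = Dstar (k + r.+1).+1 (DS k r.+1 F0) by rewrite /= addnS.
rewrite (KL hq hlam Pr dp).
rewrite (Dstar_ext (F' := fun u => s * DS k r F0 u)); last first.
  move=> u; rewrite addnS /= => du; exact: IH.
by rewrite Dstar_scale [RHS]mulrDl.
Qed.

Lemma ip_ext h (F F' G : Th -> C) : (forall t, #|dom t| = h -> F t = F' t) ->
  ip h F G = ip h F' G.
Proof. by move=> E; apply: eq_bigr => t /eqP ct; rewrite E. Qed.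

Lemma ip_ext2 h (F G G' : Th -> C) : (forall t, G t = G' t) ->
  ip h F G = ip h F G'.
Proof. by move=> E; apply: eq_bigr => t _; rewrite E. Qed.

Lemma ip_scale h (F G : Th -> C) s : ip h (fun t => s * F t) G = s * ip h F G.
Proof. by rewrite /ip mulr_sumr; apply: eq_bigr => t _; rewrite mulrA. Qed.

Lemma ip_zero2 h (F G : Th -> C) : (forall t, G t = 0) -> ip h F G = 0.
Proof. by move=> E; apply: big1 => t _; rewrite E rmorph0 mulr0. Qed.

Lemma ip_sym h (F G : Th -> C) : ip h F G = Num.conj (ip h G F).
Proof.
rewrite /ip rmorph_sum; apply: eq_bigr => t _.
by rewrite [RHS]rmorphM /= conjCK mulrC.
Qed.

Lemma ip_adj1 k (X Z : Th -> C) : ip k.+1 (Dstar k.+1 X) Z = ip k X (Dop k.+1 Z).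
Proof.
rewrite /ip /Dstar /Dop.
rewrite (eq_bigr (fun t => \sum_(p | #|dom p| == k) if subf p t then X p * Num.conj (Z t) else 0)); last first.
  move=> t /eqP ->; rewrite eqxx /= mulr_suml big_mkcondr /=.
  by apply: eq_bigr => p _; case: ifP.
rewrite exchange_big /=; apply: eq_bigr => p /eqP ->; rewrite eqxx rmorph_sum mulr_sumr.
rewrite big_mkcondr /=; apply: eq_bigr => t _; by case: ifP.
Qed.

Lemma ip_adj2 k (X Z : Th -> C) : ip k.+1 X (Dstar k.+1 Z) = ip k (Dop k.+1 X) Z.
Proof.
rewrite ip_sym ip_adj1 ip_sym conjCK; reflexivity.
Qed.

Lemma orth_lt k1 k2 c1 (F0 G0 : Th -> C) : (k1 < k2)%N ->
  Pkc q lam k1 c1 F0 -> (forall t, Dop k1 F0 t = 0) -> (forall t, Dop k2 G0 t = 0) ->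
  forall e r, (k1 + r = k2 + e)%N -> forall (s : C) (X : Th -> C),
  (forall phi, #|dom phi| = (k2 + e)%N -> X phi = s * DS k1 r F0 phi) ->
  ip (k2 + e) X (DS k2 e G0) = 0.
Proof.
move=> lt P0 D0 DG; elim=> [|e IH] r Er s X HX.
  case: r Er HX => [|r] Er HX; first by move: lt; rewrite !addn0 in Er; rewrite Er ltnn.
  move: HX; rewrite addn0 /= => HX; rewrite addn0 in Er.
  rewrite (ip_ext (F' := fun t => s * Dstar k2 (DS k1 r F0) t)); last first.
    by move=> t dt; rewrite HX // Er.
  rewrite ip_scale; case: k2 lt Er DG HX => [//|k2] lt Er DG HX.
  by rewrite ip_adj1 (ip_zero2 _ _ DG) mulr0.
case: r Er HX => [|r] Er HX.
  by move: lt Er; rewrite addn0; lia.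
rewrite /= addnS ip_adj2.
have Er' : (k1 + r = k2 + e)%N by move: Er; rewrite !addnS => [[]].
have [s1 H1] := L1 P0 D0 r.
apply: (IH r Er' (s * s1)) => phi dp.
rewrite (Dop_ext (F' := fun u => s * DS k1 r.+1 F0 u)); last first.
  by move=> u du; apply: HX; rewrite du addnS.
by rewrite Dop_scale -Er' H1 ?Er' // mulrA.
Qed.

End Main.

Unset Implicit Arguments.

Theorem lemma7p10 (C : numClosedFieldType) (Y : finType) (n m : nat)
  (q : Y -> Y -> C) (lam : 'I_m.+1 -> C)
  (hq : sym_irr_stochastic q) (hlam : eigen_enum q lam)
  (h : nat) (hh : (h <= n)%N) (b : 'I_m.+1 -> nat)
  (hb : (\sum_(i < m.+1) b i)%N = h)
  (k1 k2 : nat)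
  (hk1 : [/\ (ell b <= k1)%N, (k1 <= h)%N & (2 * k1 <= n + ell b)%N])
  (hk2 : [/\ (ell b <= k2)%N, (k2 <= h)%N & (2 * k2 <= n + ell b)%N])
  (hneq : k1 <> k2)
  (F G : Theta Y n -> C) :
  Phk q lam h (fun i => (b i)%:Z) k1 F ->
  Phk q lam h (fun i => (b i)%:Z) k2 G ->
  ip h F G = 0.
Proof.
move=> hF hG.
have [c1 [F0 [P1 D1 EF]]] := Phck_unfold hF.
have [c2 [G0 [P2 D2 EG]]] := Phck_unfold hG.
case: hk1 => _ k1h _; case: hk2 => _ k2h _.
rewrite (ip_ext (F' := DS k1 (h - k1) F0)); last by move=> t _; exact: EF.
rewrite (ip_ext2 _ _ EG).
case: (ltngtP k1 k2) => [lt|gt|eq] //.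
  have Er : (k1 + (h - k1) = k2 + (h - k2))%N by rewrite !subnKC.
  have := orth_lt hq hlam lt P1 D1 D2 Er (s := 1) (X := DS k1 (h - k1) F0).
  by rewrite subnKC //; apply=> phi _; rewrite mul1r.
have Er : (k2 + (h - k2) = k1 + (h - k1))%N by rewrite !subnKC.
rewrite ip_sym.
have := orth_lt hq hlam gt P2 D2 D1 Er (s := 1) (X := DS k2 (h - k2) G0).
by rewrite subnKC // => -> //; [rewrite rmorph0 | move=> phi _; rewrite mul1r].
Qed.
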